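(* Under the standing setup (in either Scenario I or Scenario II), assume $0<h<\frac{1}{d_{\max}}$ and that the expected graph is strongly connected. Then the system $x(t_{k+1})=(I-hL_{\sigma_k})^{\bar k}x(t_k)$ reaches consensus almost surely: for every $x(0)\in\mathbb{R}^n$, $P\{\lim_{k\to\infty}(M(t_k)-m(t_k))=0\}=1$, where $M(t_k)=\max_i x_i(t_k)$ and $m(t_k)=\min_i x_i(t_k)$. The same conclusion holds for the limiting system $x(t_{k+1})=e^{-L_{\sigma_k}\Delta}x(t_k)$.
   Context: Standing setup. $n\ge3$ agents. $G$ is an undirected connected graph on $\{1,\dots,n\}$ with symmetric $0/1$ adjacency matrix $A=[a_{ij}]$ (zero diagonal), degrees $d_i=\sum_j a_{ij}$, $d_{\max}=\max_i d_i$, and Laplacian $L=\mathrm{diag}(d_1,\dots,d_n)-A$, with entries $l_{ij}$. For a (possibly directed) $0/1$ adjacency matrix $B$ ($b_{ij}=1$ meaning agent $i$ receives from agent $j$), its Laplacian is $\mathrm{diag}(B\mathbf{1})-B$. Scenario I (agents 1,2 may fail to receive): $A_1$ is $A$ with row 1 set to zero, $A_2$ is $A$ with row 2 set to zero, $A_3$ is $A$ with rows 1 and 2 set to zero, $A_4=A$. Scenario II (agents 1,2 may fail to send): same with columns instead of rows. $L_i$ is the Laplacian of $A_i$ (so $L_4=L$). Probabilities $p_1=\alpha,p_2=\beta,p_3=\gamma,p_4=\theta\in(0,1)$ with $\alpha+\beta+\gamma+\theta=1$. The expected graph is the directed graph with weighted adjacency matrix $\sum_{i=1}^4 p_iA_i$.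 Sampling period $h>0$, integer $\bar k\ge1$, $\Delta=\bar k h$, $t_k=k\Delta$. $\sigma_0,\sigma_1,\dots$ are i.i.d. random variables in $\{1,2,3,4\}$ with $P(\sigma_k=i)=p_i$ (the graph is held fixed on each interval of length $\Delta$, during which the delta-operator system $\delta x=-L_{\sigma_k}x$ with step $h$ is run $\bar k$ times). The initial state $x(t_0)=x(0)\in\mathbb{R}^n$ is deterministic. $\mathbf{1}$ is the all-ones column vector. *)

(* Defs.v *)
(* classical reals. Matrices are functions nat -> nat -> R,
   only entries with indices < n matter; agent i (1-based) is index i-1. *)
From Stdlib Require Import Reals Lra List Relations Factorial.
Import ListNotations.
Open Scope R_scope.

Definition mat := nat -> nat -> R.
Definition vec := nat -> R.

Fixpoint sumR (n : nat) (f : nat -> R) : R :=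
  match n with O => 0 | S m => sumR m f + f m end.

Definition mat_id : mat := fun i j => if Nat.eq_dec i j then 1 else 0.
Definition mat_mul (n : nat) (A B : mat) : mat :=
  fun i j => sumR n (fun k => A i k * B k j).
Fixpoint mat_pow (n : nat) (A : mat) (k : nat) : mat :=
  match k with O => mat_id | S m => mat_mul n A (mat_pow n A m) end.
Definition mat_scale (c : R) (A : mat) : mat := fun i j => c * A i j.
Definition mat_sub (A B : mat) : mat := fun i j => A i j - B i j.
Definition mat_vec (n : nat) (A : mat) (x : vec) : vec :=
  fun i => sumR n (fun k => A i k * x k).

Definition laplacian (n : nat) (B : mat) : mat :=
  fun i j => (if Nat.eq_dec i j then sumR n (fun k => B i k) else 0) - B i j.

Definition degree (n : nat) (A : mat) (i : nat) : R := sumR n (fun k => A i k).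
Definition vmax (n : nat) (x : vec) : R := fold_right Rmax (x 0%nat) (map x (seq 0 n)).
Definition vmin (n : nat) (x : vec) : R := fold_right Rmin (x 0%nat) (map x (seq 0 n)).
Definition dmax (n : nat) (A : mat) : R := vmax n (degree n A).

Definition simple_adj (n : nat) (A : mat) : Prop :=
  (forall i j, (i < n)%nat -> (j < n)%nat -> A i j = 0 \/ A i j = 1) /\
  (forall i j, (i < n)%nat -> (j < n)%nat -> A i j = A j i) /\
  (forall i, (i < n)%nat -> A i i = 0).

(* directed edge j -> i when B i j > 0 (i receives from j) *)
Definition edge (n : nat) (B : mat) : relation nat :=
  fun j i => (i < n)%nat /\ (j < n)%nat /\ 0 < B i j.
Definition strongly_connected (n : nat) (B : mat) : Prop :=
  forall i j, (i < n)%nat -> (j < n)%nat -> clos_refl_trans nat (edge n B) i j.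
Definition connected (n : nat) (A : mat) : Prop := strongly_connected n A.

Inductive scenario := ScenarioI | ScenarioII.
Inductive mode := M1 | M2 | M3 | M4.

Definition zero_row (r : nat) (A : mat) : mat :=
  fun i j => if Nat.eq_dec i r then 0 else A i j.
Definition zero_col (c : nat) (A : mat) : mat :=
  fun i j => if Nat.eq_dec j c then 0 else A i j.

(* A_1..A_4 ; agents 1,2 are indices 0,1 *)
Definition adj_mode (sc : scenario) (A : mat) (s : mode) : mat :=
  let z := match sc with ScenarioI => zero_row | ScenarioII => zero_col end in
  match s with
  | M1 => z 0%nat A
  | M2 => z 1%nat A
  | M3 => z 0%nat (z 1%nat A)
  | M4 => A
  end.

Definition lap_mode (sc : scenario) (n : nat) (A : mat) (s : mode) : mat :=
  laplacian n (adj_mode sc A s).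

Definition prob (a b c t : R) (s : mode) : R :=
  match s with M1 => a | M2 => b | M3 => c | M4 => t end.

Definition expected_adj (sc : scenario) (A : mat) (a b c t : R) : mat :=
  fun i j => a * adj_mode sc A M1 i j + b * adj_mode sc A M2 i j
           + c * adj_mode sc A M3 i j + t * adj_mode sc A M4 i j.

Fixpoint traj (n : nat) (T : mode -> mat) (sigma : nat -> mode) (x0 : vec) (k : nat) : vec :=
  match k with
  | O => x0
  | S m => mat_vec n (T (sigma m)) (traj n T sigma x0 m)
  end.

Definition consensus (n : nat) (T : mode -> mat) (x0 : vec) (sigma : nat -> mode) : Prop :=
  Un_cv (fun k => vmax n (traj n T sigma x0 k) - vmin n (traj n T sigma x0 k)) 0.

(* Probability of the cylinder set {sigma | sigma_0..sigma_{l-1} = w} under the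
   i.i.d. product law with P(sigma_k = s) = p s. *)
Fixpoint word_prob (p : mode -> R) (w : list mode) : R :=
  match w with [] => 1 | s :: w' => p s * word_prob p w' end.
Definition has_prefix (w : list mode) (sigma : nat -> mode) : Prop :=
  forall i, (i < length w)%nat -> nth i w M1 = sigma i.

(* P(E) = 1 for the i.i.d. product measure: the complement of E has outer
   measure 0, i.e. can be covered by countably many cylinders of total
   probability at most eps, for every eps > 0. *)
Definition almost_surely (p : mode -> R) (E : (nat -> mode) -> Prop) : Prop :=
  forall eps, 0 < eps ->
    exists cover : nat -> list mode,
      (forall N, sumR N (fun k => word_prob p (cover k)) <= eps) /\
      (forall sigma, ~ E sigma -> exists k, has_prefix (cover k) sigma).

Definition is_expm (n : nat) (M E : mat) : Prop :=
  forall i j, infinite_sum (fun k => mat_pow n M k i j / INR (fact k)) (E i j).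

(* Main.v *)
From Coquelicot Require Import Coquelicot.
Require Import Defs.
From Stdlib Require Import Reals Lra Lia List Relations Classical ClassicalEpsilon Factorial.
Import ListNotations.
Open Scope R_scope.


Lemma sumR_ext n f g : (forall k, (k < n)%nat -> f k = g k) -> sumR n f = sumR n g.
Proof. induction n; intros H; simpl; auto. rewrite IHn by (intros; apply H; lia). rewrite H by lia; auto. Qed.

Lemma sumR_plus n f g : sumR n (fun k => f k + g k) = sumR n f + sumR n g.
Proof. induction n; simpl; [lra|]. rewrite IHn; lra. Qed.

Lemma sumR_scal n c f : sumR n (fun k => c * f k) = c * sumR n f.
Proof. induction n; simpl; [lra|]. rewrite IHn; lra. Qed.

Lemma sumR_minus n f g : sumR n (fun k => f k - g k) = sumR n f - sumR n g.
Proof. induction n; simpl; [lra|]. rewrite IHn; lra. Qed.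

Lemma sumR_nonneg n f : (forall k, (k < n)%nat -> 0 <= f k) -> 0 <= sumR n f.
Proof. induction n; intros H; simpl; [lra|]. specialize (IHn (fun k Hk => H k ltac:(lia))). specialize (H n ltac:(lia)). lra. Qed.

Lemma sumR_le n f g : (forall k, (k < n)%nat -> f k <= g k) -> sumR n f <= sumR n g.
Proof. induction n; intros H; simpl; [lra|]. specialize (IHn (fun k Hk => H k ltac:(lia))). specialize (H n ltac:(lia)). lra. Qed.

Lemma sumR_ge_term n f l : (forall k, (k < n)%nat -> 0 <= f k) -> (l < n)%nat -> f l <= sumR n f.
Proof.
  induction n; intros H Hl; simpl; [lia|].
  destruct (Nat.eq_dec l n).
  - subst. pose proof (sumR_nonneg n f (fun k Hk => H k ltac:(lia))). lra.
  - specialize (IHn (fun k Hk => H k ltac:(lia)) ltac:(lia)). specialize (H n ltac:(lia)). lra.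
Qed.

Lemma sumR_swap n m f : sumR n (fun i => sumR m (fun j => f i j)) = sumR m (fun j => sumR n (fun i => f i j)).
Proof.
  induction n; simpl.
  - induction m; simpl; [lra|]. rewrite <- IHm; lra.
  - rewrite IHn. rewrite <- sumR_plus. reflexivity.
Qed.

Lemma sumR_delta_l n i c : (i < n)%nat -> sumR n (fun k => if Nat.eq_dec i k then c else 0) = c.
Proof.
  induction n; intros H; simpl; [lia|].
  destruct (Nat.eq_dec i n).
  - subst. rewrite (sumR_ext n _ (fun _ => 0)). 2:{ intros k Hk. destruct (Nat.eq_dec n k); [lia|auto]. }
    assert (sumR n (fun _ => 0) = 0) as ->. { clear. induction n; simpl; lra. } lra.
  - rewrite IHn by lia. lra.
Qed.

Lemma sumR_zero n : sumR n (fun _ => 0) = 0.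
Proof. induction n; simpl; lra. Qed.

Lemma sumR_delta_gen n i f : (i < n)%nat -> sumR n (fun k => if Nat.eq_dec k i then f k else 0) = f i.
Proof.
  induction n; intros H; simpl; [lia|].
  destruct (Nat.eq_dec n i).
  - subst. rewrite (sumR_ext i _ (fun _ => 0)). 2:{ intros k Hk. destruct (Nat.eq_dec k i); [lia|auto]. }
    rewrite sumR_zero. lra.
  - rewrite IHn by lia. lra.
Qed.

Lemma sumR_shift m f : sumR (S m) f = f 0%nat + sumR m (fun p => f (S p)).
Proof. induction m; simpl in *; [lra|]. rewrite IHm. lra. Qed.

Lemma sumR_f_R0 k f : sumR (S k) f = sum_f_R0 f k.
Proof. induction k; simpl in *; [lra|]. rewrite <- IHk. simpl. lra. Qed.

Lemma fold_max_ge l d y : In y l -> y <= fold_right Rmax d l.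
Proof. induction l; simpl; [tauto|]. intros [<-|H]; [apply Rmax_l|]. eapply Rle_trans; [apply IHl; auto| apply Rmax_r]. Qed.
Lemma fold_min_le l d y : In y l -> fold_right Rmin d l <= y.
Proof. induction l; simpl; [tauto|]. intros [<-|H]; [apply Rmin_l|]. eapply Rle_trans; [apply Rmin_r|apply IHl; auto]. Qed.
Lemma fold_max_le l d b : d <= b -> (forall y, In y l -> y <= b) -> fold_right Rmax d l <= b.
Proof. induction l; simpl; intros; auto. apply Rmax_lub; auto. Qed.
Lemma fold_min_ge l d b : b <= d -> (forall y, In y l -> b <= y) -> b <= fold_right Rmin d l.
Proof. induction l; simpl; intros; auto. apply Rmin_glb; auto. Qed.
Lemma fold_min_in l d : fold_right Rmin d l = d \/ In (fold_right Rmin d l) l.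
Proof. induction l; simpl; auto. destruct (Rle_dec a (fold_right Rmin d l)).
  - rewrite Rmin_left by auto. auto.
  - rewrite Rmin_right by lra. destruct IHl as [H|H]; [rewrite H in *|]; auto. Qed.

Lemma vmax_ge n x i : (i < n)%nat -> x i <= vmax n x.
Proof. intros. unfold vmax. apply fold_max_ge. apply in_map. apply in_seq. lia. Qed.
Lemma vmin_le n x i : (i < n)%nat -> vmin n x <= x i.
Proof. intros. unfold vmin. apply fold_min_le. apply in_map. apply in_seq. lia. Qed.
Lemma vmax_le n x b : (0 < n)%nat -> (forall i, (i < n)%nat -> x i <= b) -> vmax n x <= b.
Proof. intros Hn H. unfold vmax. apply fold_max_le; [apply H; auto|].
  intros y Hy. apply in_map_iff in Hy. destruct Hy as [i [<- Hi]]. apply in_seq in Hi. apply H; lia. Qed.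
Lemma vmin_ge n x b : (0 < n)%nat -> (forall i, (i < n)%nat -> b <= x i) -> b <= vmin n x.
Proof. intros Hn H. unfold vmin. apply fold_min_ge; [apply H; auto|].
  intros y Hy. apply in_map_iff in Hy. destruct Hy as [i [<- Hi]]. apply in_seq in Hi. apply H; lia. Qed.
Lemma vmin_attained n x : (0 < n)%nat -> exists j, (j < n)%nat /\ vmin n x = x j.
Proof. intros Hn. unfold vmin. destruct (fold_min_in (map x (seq 0 n)) (x 0%nat)) as [H|H].
  - exists 0%nat; split; auto.
  - apply in_map_iff in H. destruct H as [j [Hj Hi]]. apply in_seq in Hi. exists j; split; [lia|auto]. Qed.


Definition sto (n : nat) (T : mat) : Prop :=
  (forall i k, (i < n)%nat -> (k < n)%nat -> 0 <= T i k) /\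
  (forall i, (i < n)%nat -> sumR n (fun k => T i k) = 1).

Lemma mv_upper n T y b i l : sto n T -> (forall k, (k < n)%nat -> y k <= b) ->
  (i < n)%nat -> (l < n)%nat -> mat_vec n T y i <= b - T i l * (b - y l).
Proof.
  intros [H0 H1] Hy Hi Hl. unfold mat_vec.
  rewrite (sumR_ext n _ (fun k => b * T i k - T i k * (b - y k))) by (intros; ring).
  rewrite sumR_minus, sumR_scal, H1 by auto.
  pose proof (sumR_ge_term n (fun k => T i k * (b - y k)) l) as G. simpl in G.
  assert (T i l * (b - y l) <= sumR n (fun k => T i k * (b - y k))).
  { apply G; auto. intros k Hk. apply Rmult_le_pos; [apply H0; auto| specialize (Hy k Hk); lra]. }
  lra.
Qed.

Lemma mv_le n T y b i : sto n T -> (forall k, (k < n)%nat -> y k <= b) -> (i < n)%nat ->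
  mat_vec n T y i <= b.
Proof.
  intros HT Hy Hi. pose proof (mv_upper n T y b i i HT Hy Hi Hi).
  destruct HT as [H0 _]. specialize (H0 i i Hi Hi). specialize (Hy i Hi).
  assert (0 <= T i i * (b - y i)) by (apply Rmult_le_pos; lra). lra.
Qed.

Lemma mv_ge n T y b i : sto n T -> (forall k, (k < n)%nat -> b <= y k) -> (i < n)%nat ->
  b <= mat_vec n T y i.
Proof.
  intros [H0 H1] Hy Hi. unfold mat_vec.
  rewrite (sumR_ext n _ (fun k => b * T i k + T i k * (y k - b))) by (intros; ring).
  rewrite sumR_plus, sumR_scal, H1 by auto.
  assert (0 <= sumR n (fun k => T i k * (y k - b))).
  { apply sumR_nonneg. intros k Hk. apply Rmult_le_pos; [apply H0; auto| specialize (Hy k Hk); lra]. }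
  lra.
Qed.

Section Traj.
Variable n : nat.
Variable T : mode -> mat.
Hypothesis Hn : (0 < n)%nat.
Hypothesis HT : forall s, sto n (T s).
Variable sigma : nat -> mode.
Variable x0 : vec.

Let x k := traj n T sigma x0 k.

Lemma traj_S k : x (S k) = mat_vec n (T (sigma k)) (x k).
Proof. reflexivity. Qed.

Lemma vmax_step k : vmax n (x (S k)) <= vmax n (x k).
Proof. apply vmax_le; auto. intros i Hi. rewrite traj_S. apply mv_le; auto. intros; apply vmax_ge; auto. Qed.
Lemma vmin_step k : vmin n (x k) <= vmin n (x (S k)).
Proof. apply vmin_ge; auto. intros i Hi. rewrite traj_S. apply mv_ge; auto. intros; apply vmin_le; auto. Qed.

Lemma vmax_mono k d : vmax n (x (k + d)) <= vmax n (x k).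
Proof. induction d. rewrite Nat.add_0_r; lra. rewrite Nat.add_succ_r. pose proof (vmax_step (k+d)). lra. Qed.
Lemma vmin_mono k d : vmin n (x k) <= vmin n (x (k + d)).
Proof. induction d. rewrite Nat.add_0_r; lra. rewrite Nat.add_succ_r. pose proof (vmin_step (k+d)). lra. Qed.

Definition spread k := vmax n (x k) - vmin n (x k).
Lemma spread_nonneg k : 0 <= spread k.
Proof. unfold spread. pose proof (vmax_ge n (x k) 0 Hn). pose proof (vmin_le n (x k) 0 Hn). lra. Qed.
Lemma spread_mono k k' : (k <= k')%nat -> spread k' <= spread k.
Proof. intros H. replace k' with (k + (k' - k))%nat by lia. unfold spread.
  pose proof (vmax_mono k (k'-k)). pose proof (vmin_mono k (k'-k)). lra. Qed.

Variable A : mat.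
Fixpoint reach (r : nat) (j i : nat) : Prop :=
  match r with
  | O => i = j
  | S r' => reach r' j i \/ exists l, (l < n)%nat /\ reach r' j l /\ 0 < A i l
  end.

Variable delta : R.
Hypothesis Hdelta : 0 < delta.
Hypothesis Hdiag : forall i, (i < n)%nat -> delta <= T M4 i i.
Hypothesis Hedge : forall i l, (i < n)%nat -> (l < n)%nat -> 0 < A i l -> delta <= T M4 i l.

Lemma contract_steps a r j0 : (forall t, (t < r)%nat -> sigma (a + t)%nat = M4) -> (j0 < n)%nat ->
  forall r', (r' <= r)%nat -> forall i, (i < n)%nat -> reach r' j0 i ->
  x (a + r')%nat i <= vmax n (x a) - delta ^ r' * (vmax n (x a) - x a j0).
Proof.
  intros Hs Hj0. set (M := vmax n (x a)).
  assert (HM : forall d k, (k < n)%nat -> x (a + d)%nat k <= M).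
  { intros d k Hk. apply Rle_trans with (vmax n (x (a + d)%nat)); [apply vmax_ge; auto| apply vmax_mono]. }
  assert (HD : 0 <= M - x a j0) by (pose proof (vmax_ge n (x a) j0 Hj0); unfold M; lra).
  induction r'; intros Hr i Hi Hreach.
  - simpl in Hreach. subst i. rewrite Nat.add_0_r. simpl. lra.
  - rewrite Nat.add_succ_r, traj_S, Hs by lia.
    assert (Hpos: forall l, (l < n)%nat -> delta <= T M4 i l -> x (a + r')%nat l <= M - delta ^ r' * (M - x a j0) ->
        mat_vec n (T M4) (x (a + r')%nat) i <= M - delta ^ S r' * (M - x a j0)).
    { intros l Hl Hd Hx. eapply Rle_trans. apply (mv_upper n (T M4) _ M i l); auto.
      simpl. assert (0 <= delta ^ r' * (M - x a j0)) by (apply Rmult_le_pos; auto; apply pow_le; lra).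
      assert (delta * (delta ^ r' * (M - x a j0)) <= T M4 i l * (M - x (a + r')%nat l)).
      { apply Rmult_le_compat; lra. } lra. }
    destruct Hreach as [H|[l [Hl [H1 H2]]]].
    + apply (Hpos i); auto. apply IHr'; auto; lia.
    + apply (Hpos l); auto. apply IHr'; auto; lia.
Qed.

Lemma contract a L : (forall t, (t < L)%nat -> sigma (a + t)%nat = M4) ->
  (forall j i, (j < n)%nat -> (i < n)%nat -> reach L j i) ->
  spread (a + L) <= (1 - delta ^ L) * spread a.
Proof.
  intros Hs HL. destruct (vmin_attained n (x a) Hn) as [j0 [Hj0 Hm]].
  unfold spread.
  assert (Hup : vmax n (x (a + L)%nat) <= vmax n (x a) - delta ^ L * (vmax n (x a) - x a j0)).
  { apply vmax_le; auto. intros i Hi. apply (contract_steps a L j0); auto. }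
  pose proof (vmin_mono a L). rewrite Hm in *. lra.
Qed.

End Traj.


Lemma reach_S n A r j i : reach n A r j i -> reach n A (S r) j i.
Proof. simpl; auto. Qed.
Lemma reach_mono n A r d j i : reach n A r j i -> reach n A (r + d) j i.
Proof. induction d; intros H. rewrite Nat.add_0_r; auto. rewrite Nat.add_succ_r. apply reach_S; auto. Qed.

Lemma reach_of_conn n A j i : clos_refl_trans nat (edge n A) j i -> exists r, reach n A r j i.
Proof.
  intros H. apply clos_rt_rtn1_iff in H. induction H.
  - exists 0%nat. reflexivity.
  - destruct IHclos_refl_trans_n1 as [r Hr]. exists (S r). simpl. right.
    destruct H as [Hz [Hy Ha]]. exists y. auto.
Qed.

Lemma unif (Q : nat -> nat -> Prop) : (forall r d i, Q r i -> Q (r + d)%nat i) ->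
  forall m, (forall i, (i < m)%nat -> exists r, Q r i) -> exists r, forall i, (i < m)%nat -> Q r i.
Proof.
  intros Hmono m. induction m; intros H.
  - exists 0%nat. intros; lia.
  - destruct IHm as [r1 H1]. { intros; apply H; lia. }
    destruct (H m ltac:(lia)) as [r2 H2]. exists (r1 + r2)%nat. intros i Hi.
    destruct (Nat.eq_dec i m).
    + subst. replace (r1 + r2)%nat with (r2 + r1)%nat by lia. apply Hmono; auto.
    + apply Hmono, H1; lia.
Qed.

Lemma uniform_reach n A : connected n A -> exists L, (1 <= L)%nat /\ forall j i, (j < n)%nat -> (i < n)%nat -> reach n A L j i.
Proof.
  intros HC.
  destruct (unif (fun r j => forall i, (i < n)%nat -> reach n A r j i)) with (m := n) as [L HL].
  - intros r d j H i Hi. apply reach_mono; auto.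
  - intros j Hj. apply (unif (fun r i => reach n A r j i)).
    + intros; apply reach_mono; auto.
    + intros i Hi. apply reach_of_conn. apply HC; auto.
  - exists (S L). split; [lia|]. intros j i Hj Hi. apply reach_S. apply HL; auto.
Qed.

Definition good (L : nat) (sigma : nat -> mode) (j : nat) : Prop :=
  forall t, (t < L)%nat -> sigma (j * L + t)%nat = M4.

Lemma consensus_of_good n T A delta L sigma x0 :
  (0 < n)%nat -> (forall s, sto n (T s)) -> 0 < delta ->
  (forall i, (i < n)%nat -> delta <= T M4 i i) ->
  (forall i l, (i < n)%nat -> (l < n)%nat -> 0 < A i l -> delta <= T M4 i l) ->
  (1 <= L)%nat -> (forall j i, (j < n)%nat -> (i < n)%nat -> reach n A L j i) ->
  (forall J, exists j, (J <= j)%nat /\ good L sigma j) ->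
  consensus n T x0 sigma.
Proof.
  intros Hn HT Hd Hdiag Hedge HL1 HL Hinf.
  set (c := Rmax 0 (1 - delta ^ L)).
  assert (Hc0 : 0 <= c) by apply Rmax_l.
  assert (HdL : 0 < delta ^ L) by (apply pow_lt; auto).
  assert (Hc1 : c < 1) by (unfold c; apply Rmax_lub_lt; lra).
  set (s := spread n T sigma x0).
  assert (Hstep : forall j, good L sigma j -> s (j * L + L)%nat <= c * s (j * L)%nat).
  { intros j Hj. pose proof (contract n T Hn HT sigma x0 A delta Hd Hdiag Hedge (j * L) L Hj HL).
    pose proof (spread_nonneg n T Hn sigma x0 (j * L)).
    apply Rle_trans with ((1 - delta ^ L) * spread n T sigma x0 (j * L)); auto.
    apply Rmult_le_compat_r; auto. apply Rmax_r. }
  assert (Hr : forall r, exists K, s K <= c ^ r * s 0%nat).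
  { induction r.
    - exists 0%nat. simpl; lra.
    - destruct IHr as [K HK]. destruct (Hinf K) as [j [HjK Hj]].
      exists (j * L + L)%nat. specialize (Hstep j Hj).
      assert (s (j * L)%nat <= s K) by (apply spread_mono; auto; nia).
      simpl. assert (c * s (j * L)%nat <= c * s K) by (apply Rmult_le_compat_l; auto).
      assert (c * s K <= c * (c ^ r * s 0%nat)) by (apply Rmult_le_compat_l; auto). lra. }
  unfold consensus. intros eps Heps.
  pose proof (spread_nonneg n T Hn sigma x0 0) as Hs0. fold s in Hs0.
  destruct (pow_lt_1_zero c ltac:(rewrite Rabs_pos_eq; auto) (eps / (s 0%nat + 1))) as [N HN].
  { apply Rdiv_lt_0_compat; lra. }
  destruct (Hr N) as [K HK]. exists K. intros k Hk.
  unfold R_dist. rewrite Rminus_0_r. fold (spread n T sigma x0 k). fold s.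
  pose proof (spread_nonneg n T Hn sigma x0 k). fold s in H.
  rewrite Rabs_pos_eq by auto.
  assert (s k <= s K) by (apply spread_mono; auto; lia).
  specialize (HN N (le_n _)). rewrite Rabs_pos_eq in HN by (apply pow_le; auto).
  assert (c ^ N * s 0%nat <= eps / (s 0%nat + 1) * s 0%nat) by (apply Rmult_le_compat_r; lra).
  assert (eps / (s 0%nat + 1) * s 0%nat < eps).
  { unfold Rdiv. rewrite Rmult_assoc. rewrite <- (Rmult_1_r eps) at 2. apply Rmult_lt_compat_l; auto.
    apply Rmult_lt_reg_l with (s 0%nat + 1); [lra|]. rewrite <- Rmult_assoc, Rinv_r by lra. lra. }
  lra.
Qed.


Section Prob.
Variable p : mode -> R.
Hypothesis Hp0 : forall s, 0 <= p s.
Hypothesis Hp1 : p M1 + p M2 + p M3 + p M4 = 1.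
Hypothesis Hp4 : 0 < p M4.

Definition prodw (l1 l2 : list (list mode)) : list (list mode) :=
  flat_map (fun u => map (fun v => u ++ v) l2) l1.
Definition lsum (l : list (list mode)) : R := fold_right (fun u acc => word_prob p u + acc) 0 l.

Lemma wp_app u v : word_prob p (u ++ v) = word_prob p u * word_prob p v.
Proof. induction u; simpl; [lra|]. rewrite IHu; ring. Qed.
Lemma wp_nonneg u : 0 <= word_prob p u.
Proof. induction u; simpl; [lra|]. apply Rmult_le_pos; auto. Qed.
Lemma lsum_nonneg l : 0 <= lsum l.
Proof. induction l; simpl; [lra|]. pose proof (wp_nonneg a); lra. Qed.
Lemma lsum_app l1 l2 : lsum (l1 ++ l2) = lsum l1 + lsum l2.
Proof. induction l1; simpl; [lra|]. rewrite IHl1; ring. Qed.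
Lemma lsum_map u l : lsum (map (fun v => u ++ v) l) = word_prob p u * lsum l.
Proof. induction l; simpl; [ring|]. rewrite IHl, wp_app; ring. Qed.
Lemma lsum_prodw l1 l2 : lsum (prodw l1 l2) = lsum l1 * lsum l2.
Proof. induction l1; simpl; [ring|]. unfold prodw in *. simpl. rewrite lsum_app, lsum_map, IHl1. ring. Qed.
Lemma in_prodw u v l1 l2 : In u l1 -> In v l2 -> In (u ++ v) (prodw l1 l2).
Proof. intros. unfold prodw. apply in_flat_map. exists u. split; auto. apply in_map_iff. exists v; auto. Qed.

Fixpoint all_words (l : nat) : list (list mode) :=
  match l with O => [[]] | S l' => prodw [[M1];[M2];[M3];[M4]] (all_words l') end.
Lemma lsum_all l : lsum (all_words l) = 1.
Proof. induction l; [simpl; lra|]. cbn [all_words]. rewrite lsum_prodw, IHl. simpl. lra. Qed.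

Fixpoint bad (l : nat) : list (list mode) :=
  match l with O => [] | S l' => prodw [[M1];[M2];[M3]] (all_words l') ++ prodw [[M4]] (bad l') end.
Lemma lsum_bad l : lsum (bad l) = 1 - p M4 ^ l.
Proof. induction l; [simpl; lra|]. cbn [bad]. rewrite lsum_app, !lsum_prodw, IHl, lsum_all. simpl. lra. Qed.

Variable L : nat.
Fixpoint bads (m : nat) : list (list mode) :=
  match m with O => [[]] | S m' => prodw (bad L) (bads m') end.
Lemma lsum_bads m : lsum (bads m) = (1 - p M4 ^ L) ^ m.
Proof. induction m; [simpl; lra|]. cbn [bads]. rewrite lsum_prodw, IHm, lsum_bad. simpl. ring. Qed.

Fixpoint window (sigma : nat -> mode) (a l : nat) : list mode :=
  match l with O => [] | S l' => sigma a :: window sigma (S a) l' end.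
Lemma window_app sigma a l1 l2 : window sigma a (l1 + l2) = window sigma a l1 ++ window sigma (a + l1) l2.
Proof. revert a; induction l1; intros a; simpl. rewrite Nat.add_0_r; auto. rewrite IHl1. do 3 f_equal. lia. Qed.
Lemma window_all sigma a l : In (window sigma a l) (all_words l).
Proof. revert a; induction l; intros a; [simpl; auto|]. cbn [window all_words].
  change (sigma a :: window sigma (S a) l) with ([sigma a] ++ window sigma (S a) l).
  apply in_prodw; auto. destruct (sigma a); simpl; auto. Qed.
Lemma window_bad sigma a l : (exists t, (t < l)%nat /\ sigma (a + t)%nat <> M4) -> In (window sigma a l) (bad l).
Proof. revert a; induction l; intros a [t [Ht Hs]]; [lia|]. cbn [window bad].
  change (sigma a :: window sigma (S a) l) with ([sigma a] ++ window sigma (S a) l).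
  apply in_or_app. destruct (sigma a) eqn:E.
  - left. apply in_prodw; simpl; auto. apply window_all.
  - left. apply in_prodw; simpl; auto. apply window_all.
  - left. apply in_prodw; simpl; auto. apply window_all.
  - right. apply in_prodw; simpl; auto. apply IHl. destruct t. { rewrite Nat.add_0_r in Hs; congruence. }
    exists t. split; [lia|]. replace (S a + t)%nat with (a + S t)%nat by lia. auto.
Qed.
Lemma window_nth sigma a l i : (i < l)%nat -> nth i (window sigma a l) M1 = sigma (a + i)%nat.
Proof. revert a i; induction l; intros a i Hi; [lia|]. destruct i; simpl. rewrite Nat.add_0_r; auto.
  rewrite IHl by lia. f_equal; lia. Qed.
Lemma window_len sigma a l : length (window sigma a l) = l.
Proof. revert a; induction l; intros; simpl; auto. Qed.
Lemma window_prefix sigma l : has_prefix (window sigma 0 l) sigma.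
Proof. intros i Hi. rewrite window_len in Hi. apply window_nth; auto. Qed.

Lemma window_bads sigma J m : (forall j, (J <= j)%nat -> ~ good L sigma j) ->
  In (window sigma (J * L) (m * L)) (bads m).
Proof.
  revert J; induction m; intros J H; simpl; auto.
  rewrite window_app. apply in_prodw.
  - apply window_bad. specialize (H J (le_n _)). unfold good in H.
    apply not_all_ex_not in H. destruct H as [t Ht]. exists t.
    apply imply_to_and in Ht. auto.
  - replace (J * L + L)%nat with (S J * L)%nat by lia. apply IHm. intros j Hj; apply H; lia.
Qed.

Lemma sum_nth_le l N : (N <= length l)%nat -> sumR N (fun k => word_prob p (nth k l [])) <= lsum l.
Proof.
  revert N; induction l; intros N HN; simpl in *.
  - replace N with 0%nat by lia. simpl; lra.
  - destruct N. { simpl. pose proof (wp_nonneg a). pose proof (lsum_nonneg l). lra. }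
    rewrite sumR_shift. simpl. specialize (IHl N ltac:(lia)). lra.
Qed.

Lemma as_of_good (E : (nat -> mode) -> Prop) : (1 <= L)%nat ->
  (forall sigma, (forall J, exists j, (J <= j)%nat /\ good L sigma j) -> E sigma) ->
  almost_surely p E.
Proof.
  intros HL HE eps Heps.
  set (q := p M4 ^ L).
  assert (Hq0 : 0 < q) by (apply pow_lt; auto).
  assert (Hq1 : 0 <= 1 - q) by (unfold q; rewrite <- (lsum_bad L); apply lsum_nonneg).
  assert (Hm : forall J : nat, exists m, (1 - q) ^ m < eps / 2 ^ (S J)).
  { intros J. destruct (pow_lt_1_zero (1 - q) ltac:(rewrite Rabs_pos_eq; lra) (eps / 2 ^ (S J))) as [N HN].
    { apply Rdiv_lt_0_compat; auto. apply pow_lt; lra. }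
    exists N. specialize (HN N (le_n _)). rewrite Rabs_pos_eq in HN by (apply pow_le; auto). auto. }
  set (m := fun J => proj1_sig (constructive_indefinite_description _ (Hm J))).
  assert (HmJ : forall J, (1 - q) ^ (m J) < eps / 2 ^ (S J)).
  { intros J. unfold m. destruct (constructive_indefinite_description _ (Hm J)); simpl; auto. }
  set (C := fun J => prodw (all_words (J * L)) (bads (m J))).
  assert (HCin : forall sigma J, (forall j, (J <= j)%nat -> ~ good L sigma j) ->
     In (window sigma 0 (J * L + m J * L)) (C J)).
  { intros sigma J H. rewrite window_app. apply in_prodw; [apply window_all|]. simpl. apply window_bads; auto. }
  assert (HCne : forall J, (1 <= length (C J))%nat).
  { intros J. pose proof (HCin (fun _ => M1) J) as H.
    destruct (C J); [exfalso; apply H|simpl; lia].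
    intros j _ Hg. specialize (Hg 0%nat ltac:(lia)). discriminate. }
  assert (HCsum : forall J, lsum (C J) < eps / 2 ^ (S J)).
  { intros J. unfold C. rewrite lsum_prodw, lsum_all, lsum_bads. fold q. rewrite Rmult_1_l. auto. }
  set (Bl := fix Bl K := match K with O => C 0%nat | S K' => Bl K' ++ C (S K') end).
  assert (HBlen : forall K, (S K <= length (Bl K))%nat).
  { induction K; simpl. apply HCne. rewrite length_app. specialize (HCne (S K)). lia. }
  assert (HBpre : forall K d, exists tl, Bl (K + d)%nat = Bl K ++ tl).
  { intros K d. induction d. exists []. rewrite Nat.add_0_r, app_nil_r; auto.
    destruct IHd as [tl Htl]. exists (tl ++ C (S (K + d))). rewrite Nat.add_succ_r. simpl. rewrite Htl, app_assoc. auto. }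
  assert (HBsum : forall K, lsum (Bl K) <= eps - eps / 2 ^ (S K)).
  { induction K.
    - simpl Bl. specialize (HCsum 0%nat). simpl in *. lra.
    - simpl Bl. rewrite lsum_app. specialize (HCsum (S K)).
      assert (eps / 2 ^ S (S K) = eps / 2 ^ S K / 2) as E2.
      { simpl. field. repeat split; try lra; apply pow_nonzero; lra. }
      rewrite E2 in HCsum |- *. lra. }
  assert (Hnth : forall k K, (k <= K)%nat -> nth k (Bl k) [] = nth k (Bl K) []).
  { intros k K Hk. destruct (HBpre k (K - k)%nat) as [tl Htl]. replace (k + (K - k))%nat with K in Htl by lia.
    rewrite Htl, app_nth1; try reflexivity; specialize (HBlen k); lia. }
  exists (fun k => nth k (Bl k) []). split.
  - intros N. rewrite (sumR_ext N _ (fun k => word_prob p (nth k (Bl N) []))).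
    2:{ intros k Hk. rewrite (Hnth k N) by lia. auto. }
    eapply Rle_trans. apply sum_nth_le. specialize (HBlen N); lia.
    specialize (HBsum N). assert (0 < eps / 2 ^ (S N)) by (apply Rdiv_lt_0_compat; auto; apply pow_lt; lra). lra.
  - intros sigma HnE.
    assert (HJ : exists J, forall j, (J <= j)%nat -> ~ good L sigma j).
    { apply NNPP. intros Hc. apply HnE, HE. intros J. apply NNPP. intros Hc2. apply Hc. exists J.
      intros j Hj Hg. apply Hc2. exists j. auto. }
    destruct HJ as [J HJ].
    pose proof (HCin sigma J HJ) as Hin.
    assert (Hin2 : In (window sigma 0 (J * L + m J * L)) (Bl J)).
    { destruct J. simpl. auto. simpl. apply in_or_app. right. auto. }
    apply In_nth with (d := []) in Hin2. destruct Hin2 as [k [Hk Hkn]].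
    exists k. rewrite (Hnth k (k + J)%nat) by lia.
    destruct (HBpre J k) as [tl Htl]. replace (J + k)%nat with (k + J)%nat in Htl by lia.
    rewrite Htl, app_nth1 by auto. rewrite Hkn. apply window_prefix.
Qed.

End Prob.


Lemma general n A T p delta : (0 < n)%nat -> connected n A -> (forall s, sto n (T s)) -> 0 < delta ->
  (forall i, (i < n)%nat -> delta <= T M4 i i) ->
  (forall i l, (i < n)%nat -> (l < n)%nat -> 0 < A i l -> delta <= T M4 i l) ->
  (forall s, 0 <= p s) -> p M1 + p M2 + p M3 + p M4 = 1 -> 0 < p M4 ->
  forall x0, almost_surely p (consensus n T x0).
Proof.
  intros Hn HC HT Hd Hdiag Hedge Hp0 Hp1 Hp4 x0.
  destruct (uniform_reach n A HC) as [L [HL1 HL]].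
  apply (as_of_good p Hp0 Hp1 Hp4 L); auto.
  intros sigma Hg. apply (consensus_of_good n T A delta L sigma x0); auto.
Qed.

Lemma mat_mul_id_l n M i j : (i < n)%nat -> mat_mul n mat_id M i j = M i j.
Proof. intros Hi. unfold mat_mul, mat_id.
  rewrite (sumR_ext n _ (fun k => if Nat.eq_dec i k then M i j else 0)).
  - apply sumR_delta_l; auto.
  - intros k Hk. destruct (Nat.eq_dec i k); subst; ring. Qed.
Lemma mat_mul_id_r n M i j : (j < n)%nat -> mat_mul n M mat_id i j = M i j.
Proof. intros Hj. unfold mat_mul, mat_id.
  rewrite (sumR_ext n _ (fun k => if Nat.eq_dec k j then M i k else 0)).
  - apply (sumR_delta_gen n j (fun k => M i k)); auto.
  - intros k Hk. destruct (Nat.eq_dec k j); subst; ring. Qed.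

Lemma mat_id_sto n : sto n mat_id.
Proof. split.
  - intros i k _ _. unfold mat_id. destruct Nat.eq_dec; lra.
  - intros i Hi. unfold mat_id. apply sumR_delta_l; auto. Qed.

Lemma pow_sto n P k : sto n P -> sto n (mat_pow n P k).
Proof.
  intros HP. induction k; simpl. apply mat_id_sto.
  destruct HP as [P0 P1]. destruct IHk as [Q0 Q1]. split.
  - intros i j Hi Hj. unfold mat_mul. apply sumR_nonneg. intros l Hl. apply Rmult_le_pos; auto.
  - intros i Hi. unfold mat_mul. rewrite sumR_swap.
    rewrite (sumR_ext n _ (fun l => P i l * sumR n (fun j => mat_pow n P k l j))).
    + rewrite (sumR_ext n _ (fun l => P i l)). apply P1; auto. intros l Hl. rewrite Q1 by auto. ring.
    + intros l Hl. rewrite <- sumR_scal. reflexivity.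
Qed.

Lemma pow_diag n P d k i : sto n P -> 0 <= d -> (i < n)%nat -> d <= P i i -> d ^ k <= mat_pow n P k i i.
Proof.
  intros HP Hd Hi HPi. induction k; simpl.
  - unfold mat_id. destruct Nat.eq_dec; [lra|congruence].
  - unfold mat_mul. pose proof (pow_sto n P k HP) as [Q0 _]. destruct HP as [P0 _].
    eapply Rle_trans; [|apply (sumR_ge_term n (fun l => P i l * mat_pow n P k l i) i)]; auto.
    + apply Rmult_le_compat; auto. apply pow_le; auto.
    + intros l Hl. apply Rmult_le_pos; auto.
Qed.

Lemma pow_edge n P d k i l : sto n P -> 0 <= d -> (i < n)%nat -> (l < n)%nat -> d <= P i i -> d <= P i l ->
  d ^ (S k) <= mat_pow n P (S k) i l.
Proof.
  intros HP Hd Hi Hl HPi HPl. induction k.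
  - simpl. rewrite mat_mul_id_r by auto. lra.
  - change (mat_pow n P (S (S k)) i l) with (mat_mul n P (mat_pow n P (S k)) i l).
    unfold mat_mul. pose proof (pow_sto n P (S k) HP) as [Q0 _]. destruct HP as [P0 _].
    eapply Rle_trans; [|apply (sumR_ge_term n (fun m => P i m * mat_pow n P (S k) m l) i)]; auto.
    + change (d ^ S (S k)) with (d * d ^ S k). apply Rmult_le_compat; auto. apply pow_le; auto.
    + intros m Hm. apply Rmult_le_pos; auto.
Qed.


Lemma adj_mode_cases sc A s i j : adj_mode sc A s i j = 0 \/ adj_mode sc A s i j = A i j.
Proof. destruct sc, s; unfold adj_mode, zero_row, zero_col; repeat destruct Nat.eq_dec; auto. Qed.

Section Lap.
Variable n : nat.
Variable A : mat.
Hypothesis HA : simple_adj n A.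
Variable sc : scenario.
Variable s : mode.
Let B := adj_mode sc A s.

Lemma B_bounds i j : (i < n)%nat -> (j < n)%nat -> 0 <= B i j <= A i j /\ A i j <= 1.
Proof. intros Hi Hj. destruct HA as [H01 _]. destruct (H01 i j Hi Hj) as [E|E];
  destruct (adj_mode_cases sc A s i j) as [F|F]; unfold B; rewrite ?F, ?E; lra. Qed.
Lemma B_diag i : (i < n)%nat -> B i i = 0.
Proof. intros Hi. destruct HA as [_ [_ H0]]. destruct (adj_mode_cases sc A s i i) as [F|F]; unfold B; rewrite F; auto. Qed.

Definition degB i := sumR n (fun k => B i k).
Lemma degB_bounds i : (i < n)%nat -> 0 <= degB i <= dmax n A.
Proof. intros Hi. split.
  - apply sumR_nonneg. intros k Hk. apply (B_bounds i k Hi Hk).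
  - apply Rle_trans with (degree n A i); [|apply vmax_ge; auto].
    apply sumR_le. intros k Hk. apply (B_bounds i k Hi Hk). Qed.

Lemma lap_diag i : (i < n)%nat -> lap_mode sc n A s i i = degB i.
Proof. intros Hi. unfold lap_mode, laplacian. fold B. destruct Nat.eq_dec; [|congruence]. rewrite B_diag; auto. unfold degB; ring. Qed.
Lemma lap_off i j : i <> j -> lap_mode sc n A s i j = - B i j.
Proof. intros H. unfold lap_mode, laplacian. fold B. destruct Nat.eq_dec; [congruence|]. ring. Qed.
Lemma lap_rowsum i : (i < n)%nat -> sumR n (fun k => lap_mode sc n A s i k) = 0.
Proof. intros Hi. unfold lap_mode, laplacian. rewrite sumR_minus.
  rewrite sumR_delta_l by auto. apply Rminus_diag_eq; reflexivity. Qed.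
End Lap.

Lemma dmax_pos n A h : 0 < h -> h < 1 / dmax n A -> 0 < dmax n A /\ h * dmax n A < 1.
Proof.
  intros Hh H. destruct (Rlt_le_dec 0 (dmax n A)) as [Hd|Hd].
  - split; auto. apply Rmult_lt_compat_r with (r := dmax n A) in H; auto.
    unfold Rdiv in H. rewrite Rmult_assoc, Rinv_l in H by lra. lra.
  - exfalso. destruct (Rle_lt_or_eq _ _ Hd) as [H1|H1].
    + assert (1 / dmax n A < 0). { unfold Rdiv. rewrite Rmult_1_l. apply Rinv_lt_0_compat; auto. } lra.
    + rewrite H1 in H. unfold Rdiv in H. rewrite Rinv_0 in H. lra.
Qed.

Section Disc.
Variable n : nat.
Variable A : mat.
Hypothesis HA : simple_adj n A.
Variable sc : scenario.
Variable h : R.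
Hypothesis Hh : 0 < h.
Hypothesis Hhd : h * dmax n A < 1.

Definition Pm s := mat_sub mat_id (mat_scale h (lap_mode sc n A s)).

Lemma Pm_diag s i : (i < n)%nat -> Pm s i i = 1 - h * degB n A sc s i.
Proof. intros Hi. unfold Pm, mat_sub, mat_scale. rewrite lap_diag; auto. unfold mat_id. destruct Nat.eq_dec; [ring|congruence]. Qed.
Lemma Pm_off s i j : i <> j -> Pm s i j = h * adj_mode sc A s i j.
Proof. intros H. unfold Pm, mat_sub, mat_scale. rewrite lap_off; auto. unfold mat_id. destruct Nat.eq_dec; [congruence|ring]. Qed.

Lemma Pm_sto s : sto n (Pm s).
Proof. split.
  - intros i k Hi Hk. destruct (Nat.eq_dec i k).
    + subst. rewrite Pm_diag by auto. pose proof (degB_bounds n A HA sc s k Hk).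
      assert (h * degB n A sc s k <= h * dmax n A) by (apply Rmult_le_compat_l; lra). lra.
    + rewrite Pm_off by auto. apply Rmult_le_pos; [lra|]. apply (B_bounds n A HA sc s i k Hi Hk).
  - intros i Hi. unfold Pm, mat_sub, mat_scale. rewrite sumR_minus, sumR_scal, lap_rowsum by auto.
    unfold mat_id. rewrite sumR_delta_l by auto. ring.
Qed.

Definition dlt := Rmin (1 - h * dmax n A) h.
Lemma dlt_pos : 0 < dlt.
Proof. unfold dlt. apply Rmin_glb_lt; lra. Qed.
Lemma P4_diag i : (i < n)%nat -> dlt <= Pm M4 i i.
Proof. intros Hi. rewrite Pm_diag by auto. pose proof (degB_bounds n A HA sc M4 i Hi).
  assert (h * degB n A sc M4 i <= h * dmax n A) by (apply Rmult_le_compat_l; lra).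
  unfold dlt. pose proof (Rmin_l (1 - h * dmax n A) h). lra. Qed.
Lemma P4_edge i l : (i < n)%nat -> (l < n)%nat -> 0 < A i l -> dlt <= Pm M4 i l.
Proof. intros Hi Hl H. destruct HA as [H01 [_ H0]]. destruct (Nat.eq_dec i l).
  - subst. rewrite H0 in H by auto. lra.
  - rewrite Pm_off by auto. simpl. destruct (H01 i l Hi Hl) as [E|E]; rewrite E in *; [lra|].
    unfold dlt. pose proof (Rmin_r (1 - h * dmax n A) h). lra. Qed.

Lemma disc_part kbar p : (0 < n)%nat -> connected n A -> (1 <= kbar)%nat ->
  (forall s, 0 <= p s) -> p M1 + p M2 + p M3 + p M4 = 1 -> 0 < p M4 ->
  forall x0, almost_surely p (consensus n (fun s => mat_pow n (Pm s) kbar) x0).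
Proof.
  intros Hn HC Hk Hp0 Hp1 Hp4 x0. pose proof dlt_pos.
  apply (general n A _ p (dlt ^ kbar)); auto.
  - intros s. apply pow_sto, Pm_sto.
  - apply pow_lt; auto.
  - intros i Hi. apply pow_diag; auto; [apply Pm_sto|lra|apply P4_diag; auto].
  - intros i l Hi Hl HAl. destruct kbar as [|k]; [lia|]. apply pow_edge; auto; [apply Pm_sto|lra|apply P4_diag; auto|apply P4_edge; auto].
Qed.
End Disc.


Fixpoint bin (k p : nat) : R :=
  match k, p with
  | _, O => 1
  | O, S _ => 0
  | S k', S p' => bin k' p' + bin k' (S p')
  end.

Lemma bin_gt k p : (k < p)%nat -> bin k p = 0.
Proof. revert p; induction k; intros p H; destruct p; simpl; try lia; auto.
  rewrite !IHk by lia. ring. Qed.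
Lemma bin_0 k : bin k 0 = 1.
Proof. destruct k; reflexivity. Qed.
Lemma bin_diag k : bin k k = 1.
Proof. induction k; simpl; auto. rewrite IHk, bin_gt by lia. ring. Qed.

Lemma bin_fact k p : (p <= k)%nat -> bin k p * INR (fact p) * INR (fact (k - p)) = INR (fact k).
Proof.
  revert p; induction k; intros p H.
  - replace p with 0%nat by lia. simpl. ring.
  - destruct p.
    + simpl bin. rewrite Nat.sub_0_r. simpl fact at 1. simpl INR at 1. ring.
    + simpl bin. replace (S k - S p)%nat with (k - p)%nat by lia.
      destruct (Nat.eq_dec p k).
      * subst. rewrite (bin_gt k (S k)) by lia. rewrite Nat.sub_diag, bin_diag. simpl (INR (fact 0)). ring.
      * assert (E1 := IHk p ltac:(lia)). assert (E2 := IHk (S p) ltac:(lia)).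
        replace (k - p)%nat with (S (k - S p)) in * by lia.
        rewrite !fact_simpl, !mult_INR in *.
        set (x := bin k p) in *. set (y := bin k (S p)) in *.
        set (a := INR (fact p)) in *. set (b := INR (fact (k - S p))) in *. set (f := INR (fact k)) in *.
        replace (INR (S (k - S p))) with (INR k - INR p) in * by (rewrite S_INR, minus_INR by lia; rewrite S_INR; ring).
        rewrite !S_INR in *.
        replace ((x + y) * ((INR p + 1) * a) * ((INR k - INR p) * b)) with
          ((INR p + 1) * (x * a * ((INR k - INR p) * b)) + (INR k - INR p) * (y * ((INR p + 1) * a) * b)) by ring.
        rewrite E1, E2. ring.
Qed.

Lemma mat_pow_ext n M M' k : (forall i j, M i j = M' i j) -> forall i j, mat_pow n M k i j = mat_pow n M' k i j.
Proof. intros H. induction k; intros i j; simpl; auto. unfold mat_mul. apply sumR_ext. intros l Hl. rewrite H, IHk. auto. Qed.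

Lemma mat_pow_scale n t Z k : forall i j, mat_pow n (mat_scale t Z) k i j = t ^ k * mat_pow n Z k i j.
Proof. induction k; intros i j; simpl. ring. unfold mat_mul.
  rewrite <- sumR_scal. apply sumR_ext. intros l Hl. rewrite IHk. unfold mat_scale. ring. Qed.

Lemma sumR_push n c f : c * sumR n f = sumR n (fun k => c * f k).
Proof. rewrite sumR_scal. auto. Qed.

Lemma mat_binom n X d k : forall i j, (i < n)%nat ->
  mat_pow n (fun a b => X a b + d * mat_id a b) k i j =
  sumR (S k) (fun p => bin k p * d ^ p * mat_pow n X (k - p) i j).
Proof.
  induction k; intros i j Hi.
  - simpl. ring.
  - set (Z := fun a b => X a b + d * mat_id a b).
    change (mat_pow n Z (S k) i j) with (mat_mul n Z (mat_pow n Z k) i j).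
    unfold mat_mul at 1.
    rewrite (sumR_ext n _ (fun l => X i l * mat_pow n Z k l j + d * (mat_id i l * mat_pow n Z k l j)))
      by (intros; unfold Z; ring).
    rewrite sumR_plus, sumR_scal.
    fold (mat_mul n mat_id (mat_pow n Z k) i j). rewrite mat_mul_id_l by auto.
    rewrite (sumR_ext n (fun l => X i l * mat_pow n Z k l j)
       (fun l => sumR (S k) (fun p => X i l * (bin k p * d ^ p * mat_pow n X (k - p) l j)))).
    2:{ intros l Hl. unfold Z. rewrite IHk by auto. apply sumR_push. }
    rewrite sumR_swap.
    rewrite (sumR_ext (S k) _ (fun p => bin k p * d ^ p * mat_pow n X (S (k - p)) i j)).
    2:{ intros p Hp. simpl mat_pow. unfold mat_mul. rewrite sumR_push. apply sumR_ext. intros; ring. }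
    fold Z. rewrite IHk by auto.
    rewrite (sumR_shift (S k)). simpl bin. rewrite Nat.sub_0_r.
    rewrite (sumR_ext (S k) (fun p => (bin k p + bin k (S p)) * d ^ S p * mat_pow n X (S k - S p) i j)
      (fun p => bin k p * d ^ S p * mat_pow n X (k - p) i j + bin k (S p) * d ^ S p * mat_pow n X (k - p) i j))
      by (intros; simpl; ring).
    rewrite sumR_plus.
    rewrite (sumR_shift k (fun p => bin k p * d ^ p * mat_pow n X (S (k - p)) i j)).
    simpl (bin k 0). rewrite Nat.sub_0_r.
    assert (E : sumR (S k) (fun p => bin k (S p) * d ^ S p * mat_pow n X (k - p) i j)
       = sumR k (fun p => bin k (S p) * d ^ S p * mat_pow n X (S (k - S p)) i j)).
    { simpl sumR at 1. rewrite bin_gt by lia. rewrite Rmult_0_l, Rmult_0_l, Rplus_0_r.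
      apply sumR_ext. intros p Hp. do 3 f_equal. lia. }
    rewrite E. rewrite sumR_push.
    rewrite (sumR_ext (S k) (fun k0 => d * (bin k k0 * d ^ k0 * mat_pow n X (k - k0) i j))
      (fun p => bin k p * d ^ S p * mat_pow n X (k - p) i j)) by (intros; simpl; ring).
    simpl (d ^ 0). rewrite bin_0. ring.
Qed.


Lemma isum_ext f g l : (forall k, f k = g k) -> infinite_sum f l -> infinite_sum g l.
Proof. intros H Hf. apply is_series_Reals. apply is_series_Reals in Hf. eapply is_series_ext; eauto. Qed.
Lemma isum_plus f g l1 l2 : infinite_sum f l1 -> infinite_sum g l2 -> infinite_sum (fun k => f k + g k) (l1 + l2).
Proof. intros H1 H2. apply is_series_Reals. apply is_series_Reals in H1, H2. exact (is_series_plus _ _ _ _ H1 H2). Qed.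
Lemma isum_ge_term f l q : infinite_sum f l -> (forall k, 0 <= f k) -> f q <= l.
Proof. intros H Hp. apply Rle_trans with (sum_f_R0 f q).
  - destruct q; simpl; [lra|]. pose proof (cond_pos_sum f q Hp). lra.
  - apply sum_incr; auto. Qed.
Lemma isum_exp x : infinite_sum (fun p => x ^ p / INR (fact p)) (exp x).
Proof. unfold exp. destruct (exist_exp x) as [l Hl]. simpl. unfold exp_in in Hl.
  eapply isum_ext; [|exact Hl]. intros k. simpl. unfold Rdiv. ring. Qed.

Lemma sumR_const n a : sumR n (fun _ => a) = INR n * a.
Proof. induction n; [simpl; ring|]. cbn [sumR]. rewrite IHn, S_INR. ring. Qed.

Lemma pow_rowsum n M rho k i : (forall i, (i < n)%nat -> sumR n (fun j => M i j) = rho) -> (i < n)%nat ->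
  sumR n (fun j => mat_pow n M k i j) = rho ^ k.
Proof.
  intros HM. revert i. induction k; intros i Hi; simpl.
  - unfold mat_id. apply sumR_delta_l; auto.
  - unfold mat_mul. rewrite sumR_swap.
    rewrite (sumR_ext n _ (fun l => rho ^ k * M i l)).
    + rewrite sumR_scal, HM by auto. ring.
    + intros l Hl. rewrite sumR_scal. rewrite IHk; auto. ring.
Qed.

Lemma isum_sumR n (f : nat -> nat -> R) (l : nat -> R) :
  (forall j, (j < n)%nat -> infinite_sum (f j) (l j)) ->
  infinite_sum (fun k => sumR n (fun j => f j k)) (sumR n l).
Proof.
  induction n; intros H; simpl.
  - intros eps Heps. exists 0%nat. intros m _. unfold R_dist.
    replace (sum_f_R0 (fun _ => 0) m) with 0. rewrite Rminus_0_r, Rabs_R0; auto.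
    induction m; simpl; lra.
  - apply isum_plus. apply IHn; intros; apply H; lia. apply H; lia.
Qed.

Lemma isum_delta0 : infinite_sum (fun k => 0 ^ k / INR (fact k)) 1.
Proof. intros eps Heps. exists 0%nat. intros m _. unfold R_dist.
  replace (sum_f_R0 (fun k => 0 ^ k / INR (fact k)) m) with 1. rewrite Rminus_diag, Rabs_R0; auto.
  induction m. simpl. field. cbn [sum_f_R0]. rewrite <- IHm. rewrite pow_i by lia. unfold Rdiv. ring. Qed.


Section Expo.
Variable n : nat.
Variable A : mat.
Hypothesis HA : simple_adj n A.
Hypothesis Hn : (0 < n)%nat.
Variable sc : scenario.
Variable s : mode.
Variable t : R.
Hypothesis Ht : 0 < t.
Hypothesis Hc : 0 < dmax n A.
Let c := dmax n A.
Let Lm := lap_mode sc n A s.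
Lemma c_pos : 0 < c. Proof. exact Hc. Qed.
Definition Xm : mat := fun a b => c * mat_id a b - Lm a b.

Lemma X_bounds i j : (i < n)%nat -> (j < n)%nat -> 0 <= Xm i j <= c + 1.
Proof. intros Hi Hj. unfold Xm, Lm. destruct (Nat.eq_dec i j).
  - subst. rewrite lap_diag by auto. pose proof (degB_bounds n A HA sc s j Hj). unfold mat_id.
    destruct Nat.eq_dec; [|congruence]. fold c in H. lra.
  - rewrite lap_off by auto. unfold mat_id. destruct Nat.eq_dec; [congruence|].
    destruct (B_bounds n A HA sc s i j Hi Hj) as [[? ?] ?]. fold c. pose proof c_pos. lra.
Qed.

Lemma Xpow_bounds q i j : (i < n)%nat -> (j < n)%nat -> 0 <= mat_pow n Xm q i j <= (INR n * (c + 1)) ^ q.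
Proof. revert i j. induction q; intros i j Hi Hj; simpl.
  - unfold mat_id. destruct Nat.eq_dec; lra.
  - unfold mat_mul. split.
    + apply sumR_nonneg. intros l Hl. apply Rmult_le_pos; [apply X_bounds|apply IHq]; auto.
    + apply Rle_trans with (sumR n (fun _ => (c + 1) * (INR n * (c + 1)) ^ q)).
      * apply sumR_le. intros l Hl. destruct (X_bounds i l Hi Hl). destruct (IHq l j Hl Hj).
        apply Rmult_le_compat; auto.
      * rewrite sumR_const. lra.
Qed.

Definition aa p := (- c * t) ^ p / INR (fact p).
Definition bb i j q := mat_pow n Xm q i j * t ^ q / INR (fact q).

Lemma bb_nonneg i j q : (i < n)%nat -> (j < n)%nat -> 0 <= bb i j q.
Proof. intros. unfold bb. apply Rmult_le_pos; [apply Rmult_le_pos; [apply Xpow_bounds; auto|apply pow_le; lra]|].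
  apply Rlt_le, Rinv_0_lt_compat, INR_fact_lt_0. Qed.

Lemma term_eq i j k : (i < n)%nat ->
  mat_pow n (mat_scale (- t) Lm) k i j / INR (fact k) = sum_f_R0 (fun p => aa p * bb i j (k - p)) k.
Proof.
  intros Hi.
  rewrite (mat_pow_ext n (mat_scale (- t) Lm) (mat_scale t (fun a b => Xm a b + (- c) * mat_id a b)))
    by (intros; unfold mat_scale, Xm; ring).
  rewrite mat_pow_scale, mat_binom by auto. rewrite <- sumR_f_R0.
  replace (t ^ k * sumR (S k) (fun p => bin k p * (- c) ^ p * mat_pow n Xm (k - p) i j) / INR (fact k))
    with (t ^ k / INR (fact k) * sumR (S k) (fun p => bin k p * (- c) ^ p * mat_pow n Xm (k - p) i j))
    by (field; apply INR_fact_neq_0).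
  rewrite <- sumR_scal. apply sumR_ext. intros p Hp. unfold aa, bb.
  assert (Hb := bin_fact k p ltac:(lia)).
  assert (F1 := INR_fact_neq_0 p). assert (F2 := INR_fact_neq_0 (k - p)). assert (F3 := INR_fact_neq_0 k).
  assert (Hbn : bin k p <> 0). { intros E. rewrite E in Hb. apply F3. rewrite <- Hb. ring. }
  rewrite <- Hb. replace (t ^ k) with (t ^ p * t ^ (k - p)) by (rewrite <- pow_add; f_equal; lia).
  rewrite Rpow_mult_distr. field. auto.
Qed.

Variable E : mat.
Hypothesis HE : is_expm n (mat_scale (- t) Lm) E.

Lemma exp_rep i j : (i < n)%nat -> (j < n)%nat ->
  exists F, (forall q, bb i j q <= F) /\ E i j = exp (- c * t) * F.
Proof.
  intros Hi Hj. pose proof c_pos.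
  assert (Ha : is_series aa (exp (- c * t))). { apply is_series_Reals. apply isum_exp. }
  assert (Haa : ex_series (fun p => Rabs (aa p))).
  { exists (exp (c * t)). apply is_series_Reals. eapply isum_ext; [|apply isum_exp].
    intros p. unfold aa. unfold Rdiv. rewrite Rabs_mult, <- RPow_abs.
    replace (Rabs (- c * t)) with (c * t) by (rewrite Rabs_mult, Rabs_Ropp, !Rabs_pos_eq; lra).
    rewrite (Rabs_pos_eq (/ _)); auto. apply Rlt_le, Rinv_0_lt_compat, INR_fact_lt_0. }
  assert (Hb : ex_series (bb i j)).
  { apply (@ex_series_le R_AbsRing R_CompleteNormedModule (bb i j) (fun q => (INR n * (c + 1) * t) ^ q / INR (fact q))).
    - intros q. change (norm (bb i j q)) with (Rabs (bb i j q)). rewrite Rabs_pos_eq by (apply bb_nonneg; auto).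
      unfold bb. unfold Rdiv. apply Rmult_le_compat_r. apply Rlt_le, Rinv_0_lt_compat, INR_fact_lt_0.
      rewrite Rpow_mult_distr. apply Rmult_le_compat_r. apply pow_le; lra. apply Xpow_bounds; auto.
    - exists (exp (INR n * (c + 1) * t)). apply is_series_Reals. apply isum_exp. }
  destruct Hb as [F HF].
  assert (Hbb : ex_series (fun q => Rabs (bb i j q))).
  { exists F. eapply is_series_ext; [|exact HF]. intros q. rewrite Rabs_pos_eq; auto. apply bb_nonneg; auto. }
  pose proof (is_series_mult _ _ _ _ Ha HF Haa Hbb) as HM.
  exists F. split.
  - intros q. apply (isum_ge_term (bb i j)). apply is_series_Reals; auto. intros; apply bb_nonneg; auto.
  - apply is_series_Reals in HM. apply (uniqueness_sum (fun k => mat_pow n (mat_scale (- t) Lm) k i j / INR (fact k))).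
    + apply HE.
    + eapply isum_ext; [|exact HM]. intros k. rewrite term_eq; auto.
Qed.

Lemma E_sto : sto n E.
Proof. split.
  - intros i k Hi Hk. destruct (exp_rep i k Hi Hk) as [F [HF ->]]. apply Rmult_le_pos.
    apply Rlt_le, exp_pos. eapply Rle_trans; [apply (bb_nonneg i k 0); auto|apply HF].
  - intros i Hi. apply (uniqueness_sum (fun k => 0 ^ k / INR (fact k))); [|apply isum_delta0].
    eapply isum_ext; [|apply (isum_sumR n (fun j k => mat_pow n (mat_scale (- t) Lm) k i j / INR (fact k)))].
    + intros k. simpl. unfold Rdiv. rewrite (sumR_ext n _ (fun j => / INR (fact k) * mat_pow n (mat_scale (- t) Lm) k i j)) by (intros; ring).
      rewrite sumR_scal. rewrite (pow_rowsum n _ 0); auto. ring.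
      intros i' Hi'. unfold mat_scale. rewrite sumR_scal. unfold Lm. rewrite lap_rowsum; auto. ring.
    + intros j Hj. apply HE.
Qed.

Lemma E_diag i : (i < n)%nat -> exp (- c * t) * Rmin 1 t <= E i i.
Proof. intros Hi. destruct (exp_rep i i Hi Hi) as [F [HF ->]]. apply Rmult_le_compat_l. apply Rlt_le, exp_pos.
  eapply Rle_trans; [|apply (HF 0%nat)]. unfold bb. simpl. unfold mat_id. destruct Nat.eq_dec; [|congruence].
  pose proof (Rmin_l 1 t). lra. Qed.

Lemma E_edge i l : s = M4 -> (i < n)%nat -> (l < n)%nat -> 0 < A i l -> exp (- c * t) * Rmin 1 t <= E i l.
Proof. intros Hs Hi Hl HAl. destruct (exp_rep i l Hi Hl) as [F [HF ->]]. apply Rmult_le_compat_l. apply Rlt_le, exp_pos.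
  eapply Rle_trans; [|apply (HF 1%nat)]. unfold bb. simpl. rewrite mat_mul_id_r by auto.
  destruct HA as [H01 [_ H0]]. assert (i <> l) by (intros ->; rewrite H0 in HAl by auto; lra).
  unfold Xm, Lm. rewrite lap_off by auto. rewrite Hs. simpl adj_mode. unfold mat_id. destruct Nat.eq_dec; [congruence|].
  destruct (H01 i l Hi Hl) as [E1|E1]; rewrite E1 in *; [lra|]. pose proof (Rmin_r 1 t). lra. Qed.
End Expo.


Theorem theorem3 :
  forall (sc : scenario) (n : nat) (A : mat) (h : R) (kbar : nat)
         (alpha beta gamma theta : R),
    (3 <= n)%nat ->
    simple_adj n A ->
    connected n A ->
    0 < alpha < 1 -> 0 < beta < 1 -> 0 < gamma < 1 -> 0 < theta < 1 ->
    alpha + beta + gamma + theta = 1 ->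
    (1 <= kbar)%nat ->
    0 < h -> h < 1 / dmax n A ->
    strongly_connected n (expected_adj sc A alpha beta gamma theta) ->
    (forall x0 : vec,
       almost_surely (prob alpha beta gamma theta)
         (consensus n
            (fun s => mat_pow n (mat_sub mat_id (mat_scale h (lap_mode sc n A s))) kbar)
            x0)) /\
    (forall Ex : mode -> mat,
       (forall s, is_expm n (mat_scale (- (INR kbar * h)) (lap_mode sc n A s)) (Ex s)) ->
       forall x0 : vec,
         almost_surely (prob alpha beta gamma theta) (consensus n Ex x0)).
Proof.
  intros sc n A h kbar al be ga th Hn HA HC Ha Hb Hg Ht Hsum Hk Hh Hhd _.
  destruct (dmax_pos n A h Hh Hhd) as [Hdp Hhd2].
  assert (Hp0 : forall s, 0 <= prob al be ga th s) by (intros []; simpl; lra).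
  assert (Hp1 : prob al be ga th M1 + prob al be ga th M2 + prob al be ga th M3 + prob al be ga th M4 = 1) by (simpl; lra).
  split.
  - intros x0. apply (disc_part n A HA sc h Hh Hhd2 kbar); auto. lia. simpl; lra.
  - intros Ex HEx x0.
    assert (Htp : 0 < INR kbar * h) by (apply Rmult_lt_0_compat; auto; apply lt_0_INR; lia).
    apply (general n A Ex _ (exp (- dmax n A * (INR kbar * h)) * Rmin 1 (INR kbar * h))); auto; try lia.
    + intros s. apply (E_sto n A HA ltac:(lia) sc s (INR kbar * h)); auto.
    + apply Rmult_lt_0_compat. apply exp_pos. apply Rmin_glb_lt; lra.
    + intros i Hi. apply (E_diag n A HA ltac:(lia) sc M4); auto.
    + intros i l Hi Hl HAl. apply (E_edge n A HA ltac:(lia) sc M4 _ Htp Hdp _ (HEx M4)); auto.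
    + simpl; lra.
Qed.
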